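(* Let $\langle\mathcal X,\mathcal C,d,(x_1,\dots,x_n)\rangle$ be a facility location instance, let $q^\star$ be a population-optimal location, and for each panel $S$ let $\overline q(S)$ be a panel-optimal location. Fix $T>2$ and $\delta\in(0,1)$, and let $k\le n$ be an integer with $$k\ge\frac{2\log(1/\delta)}{\log\big(T^2/(4(T-1))\big)} .$$ Then $\mathbb P_{S\sim\mathcal U_{k,n}}\big[d(q^\star,\overline q(S))\le T\cdot\textsc{Social-Opt}\big]\ge1-\delta$.
   Context: A facility location instance $\langle\mathcal X,\mathcal C,d,(x_1,\dots,x_n)\rangle$ consists of a metric space $(\mathcal X,d)$ with $d:\mathcal X\times\mathcal X\to[0,1]$, a set of candidate locations $\mathcal C\subseteq\mathcal X$, and agent locations $x_1,\dots,x_n\in\mathcal X$. $\textsc{Social-Cost}(q)=\frac1n\sum_{i=1}^n d(q,x_i)$, $\textsc{Social-Opt}=\min_{q\in\mathcal C}\textsc{Social-Cost}(q)$, $q^\star\in\arg\min_{q\in\mathcal C}\textsc{Social-Cost}(q)$; for a panel $S\subseteq[n]$ of size $k$, $\textsc{Panel-Cost}(q,S)=\frac1k\sum_{i\in S}d(q,x_i)$ and $\overline q(S)\in\arg\min_{q\in\mathcal C}\textsc{Panel-Cost}(q,S)$ (minimizers are assumed to exist). $\mathcal U_{k,n}$ is the uniform distribution over subsets of $[n]$ of size $k$. *)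

(* Defs.v *)
From HB Require Import structures.
From mathcomp Require Import all_boot all_order all_algebra.
From mathcomp Require Import all_classical all_reals all_analysis.
Set Implicit Arguments. Unset Strict Implicit. Unset Printing Implicit Defensive.
Import Order.TTheory GRing.Theory Num.Theory.
Local Open Scope ring_scope.

Section FacilityLocation.
Variables (R : realType) (X : Type).

Definition is_metric01 (d : X -> X -> R) : Prop :=
  [/\ forall p q, 0 <= d p q <= 1,
      forall p q, d p q = 0 <-> p = q,
      forall p q, d p q = d q p
    & forall p q r, d p r <= d p q + d q r].

Definition social_cost (n : nat) (d : X -> X -> R) (x : 'I_n -> X) (q : X) : R :=
  n%:R^-1 * \sum_(i < n) d q (x i).

Definition panel_cost (n : nat) (d : X -> X -> R) (x : 'I_n -> X)
    (q : X) (S : {set 'I_n}) : R :=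
  (#|S|%:R)^-1 * \sum_(i in S) d q (x i).

(* Social-Opt = min over candidates; represented via a minimizer. *)
Definition is_social_opt (n : nat) (d : X -> X -> R) (C : X -> Prop)
    (x : 'I_n -> X) (qs : X) : Prop :=
  C qs /\ forall q, C q -> social_cost d x qs <= social_cost d x q.

Definition is_panel_opt (n : nat) (d : X -> X -> R) (C : X -> Prop)
    (x : 'I_n -> X) (S : {set 'I_n}) (q0 : X) : Prop :=
  C q0 /\ forall q, C q -> panel_cost d x q0 S <= panel_cost d x q S.

End FacilityLocation.

Definition unif_prob (R : realType) (n k : nat) (E : pred {set 'I_n}) : R :=
  (#|[set S : {set 'I_n} | (#|S| == k) && E S]|%:R)
  / (#|[set S : {set 'I_n} | #|S| == k]|%:R).

(* Main.v *)
Require Import Defs.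
From HB Require Import structures.
From mathcomp Require Import all_boot all_order all_algebra.
From mathcomp Require Import ring lra.
Import Order.TTheory GRing.Theory Num.Theory.
Local Open Scope ring_scope.

Lemma bern_tan (R : realFieldType) (P Q : R) (j : nat) : 0 <= P -> 0 <= Q ->
  P ^+ j * (P + j.+1%:R * (Q - P)) <= Q ^+ j.+1.
Proof.
move=> P0 Q0; elim: j => [|j IH]; first by rewrite expr0 mul1r expr1; lra.
rewrite exprS [Q ^+ _.+1]exprS.
apply: (le_trans _ (ler_wpM2l Q0 IH)).
have hP : 0 <= P ^+ j by rewrite exprn_ge0.
rewrite -subr_ge0.
have -> : Q * (P ^+ j * (P + j.+1%:R * (Q - P))) - P * P ^+ j * (P + j.+2%:R * (Q - P))
   = P ^+ j * (j.+1%:R * (Q - P) ^+ 2).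
  rewrite -[j.+2]addn1 -[j.+1]addn1 !natrD; ring.
by rewrite mulr_ge0 // mulr_ge0 // ?sqr_ge0.
Qed.

Section Mac.
Variables (R : realFieldType) (T : finType) (a : T -> R).
Hypothesis a0 : forall i, 0 <= a i.

Definition Esym (A : {set T}) (k : nat) : R :=
  \sum_(S : {set T} | (S \subset A) && (#|S| == k)) \prod_(i in S) a i.

Lemma Esym_ge0 A k : 0 <= Esym A k.
Proof. by apply: sumr_ge0 => S _; apply: prodr_ge0 => i _. Qed.

Lemma Esym0 A : Esym A 0 = 1.
Proof.
rewrite /Esym (big_pred1 set0) ?big_set0 // => S /=.
rewrite cards_eq0 andbC; case: eqP => //= ->; exact: sub0set.
Qed.

Lemma Esym_set0 k : Esym set0 k.+1 = 0.
Proof.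
rewrite /Esym big_pred0 // => S; rewrite subset0.
by apply/negP => /andP[/eqP -> ]; rewrite cards0.
Qed.

Lemma Esym_rec (A : {set T}) (x : T) (k : nat) : x \in A ->
  Esym A k.+1 = Esym (A :\ x) k.+1 + a x * Esym (A :\ x) k.
Proof.
move=> xA; rewrite /Esym (bigID (fun S : {set T} => x \in S)) /= addrC; congr (_ + _).
  by apply: eq_bigl => S; rewrite subsetD1 andbAC.
rewrite (reindex_onto (fun S => x |: S) (fun S => S :\ x)) /=; last first.
  by move=> S /andP[_ xS]; rewrite setD1K.
have E S : ((x |: S) :\ x == S) = (x \notin S).
  apply/eqP/idP => [<-|/setU1K //]; by rewrite setD11.
rewrite mulr_sumr; apply: eq_big => S.
  rewrite setU11 andbT E subsetD1; case xS: (x \in S); rewrite /= ?andbF ?andbT //.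
  by rewrite cardsU1 xS add1n eqSS subUset sub1set xA.
by rewrite E => /andP[_ xS]; rewrite big_setU1.
Qed.
Lemma mac_step (M x s E1 E0 c c1 c0 : R) (j : nat) :
  0 < M -> 0 <= x -> 0 <= s -> 0 <= c ->
  M ^+ j.+1 * E1 <= c1 * s ^+ j.+1 ->
  M ^+ j * E0 <= c0 * s ^+ j ->
  (M + 1) * c1 = (M - j%:R) * c ->
  (M + 1) * c0 = j.+1%:R * c ->
  (M + 1) ^+ j.+1 * (E1 + x * E0) <= c * (x + s) ^+ j.+1.
Proof.
move=> M0 x0 s0 c0' h1 h0 e1 e0.
have N0 : 0 < M + 1 by lra.
have MX : 0 < M ^+ j.+1 by rewrite exprn_gt0.
rewrite -(ler_pM2l MX).
have st1 : M ^+ j.+1 * ((M + 1) ^+ j.+1 * (E1 + x * E0)) <=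
   (M + 1) ^+ j.+1 * (c1 * s ^+ j.+1 + x * M * (c0 * s ^+ j)).
  have -> : M ^+ j.+1 * ((M + 1) ^+ j.+1 * (E1 + x * E0)) =
     (M + 1) ^+ j.+1 * (M ^+ j.+1 * E1 + x * M * (M ^+ j * E0)).
    rewrite exprS; ring.
  apply: ler_wpM2l; first by rewrite exprn_ge0 // ltW.
  apply: lerD => //; apply: ler_wpM2l => //; rewrite mulr_ge0 // ltW //.
apply: (le_trans st1); rewrite -(ler_pM2l N0).
have B := @bern_tan R _ _ j (mulr_ge0 s0 (ltW N0)) (mulr_ge0 (addr_ge0 s0 x0) (ltW M0)).
have -> : (M + 1) * ((M + 1) ^+ j.+1 * (c1 * s ^+ j.+1 + x * M * (c0 * s ^+ j)))
  = (M + 1) * c * ((s * (M + 1)) ^+ j * (s * (M + 1) + j.+1%:R * ((s + x) * M - s * (M + 1)))).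
  rewrite !exprMn !exprS.
  have -> : (M + 1) * ((M + 1) * (M + 1) ^+ j * (c1 * (s * s ^+ j) + x * M * (c0 * s ^+ j)))
     = (M + 1) * (M + 1) ^+ j * (((M + 1) * c1) * (s * s ^+ j) + x * M * ((M + 1) * c0) * s ^+ j) by ring.
  have hj : j.+1%:R = j%:R + 1 :> R by rewrite -addn1 natrD.
  rewrite e1 e0 hj; set J := j%:R; set P := s ^+ j; set Q := (M + 1) ^+ j; ring.
have -> : (M + 1) * (M ^+ j.+1 * (c * (x + s) ^+ j.+1)) = (M + 1) * c * ((s + x) * M) ^+ j.+1.
  rewrite exprMn [s + x]addrC; ring.
apply: ler_wpM2l => //; rewrite mulr_ge0 // ltW //.
Qed.

Lemma maclaurin_gen N : forall A : {set T}, #|A| = N -> forall k,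
  (N ^ k)%:R * Esym A k <= 'C(N, k)%:R * (\sum_(i in A) a i) ^+ k.
Proof.
elim: N => [|m IH] A cA k.
  rewrite (cards0_eq cA); case: k => [|k]; first by rewrite Esym0 expn0 bin0 expr0 lexx.
  by rewrite Esym_set0 mulr0 bin0n mul0r.
have [x xA] : exists x, x \in A by apply/card_gt0P; rewrite cA.
have cA' : #|A :\ x| = m by move: cA; rewrite (cardsD1 x) xA add1n => -[].
rewrite (big_setD1 x xA) /=.
set s := \sum_(i in A :\ x) a i.
have s0 : 0 <= s by apply: sumr_ge0.
case: k => [|j]; first by rewrite Esym0 expn0 bin0 expr0 lexx.
rewrite (Esym_rec A x j xA).
have IH1 := IH _ cA' j.+1.
have IH0 := IH _ cA' j.
have [m0|mpos] := posnP m.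
  subst m; have E0 : A :\ x = finset.set0 by apply: cards0_eq.
  rewrite /s E0 big_set0 Esym_set0 add0r addr0 cards0 exp1n mul1r.
  case: j {IH1 IH0} => [|j]; first by rewrite Esym0 bin1 mul1r !expr1 mulr1.
  by rewrite Esym_set0 mulr0 bin_small // mul0r.
have [jm|mj] := leqP j m; last first.
  have hE k' : (m < k')%N -> Esym (A :\ x) k' = 0.
    move=> mk; apply/eqP; rewrite eq_le Esym_ge0 andbT; have := IH _ cA' k'.
    by rewrite bin_small // mul0r pmulr_rle0 // ltr0n expn_gt0 mpos.
  by rewrite bin_small // mul0r (hE j.+1 (ltnW mj)) (hE j mj) mulr0 addr0 mulr0.
rewrite !natrX in IH1 IH0.
have -> : (m.+1 ^ j.+1)%:R = (m%:R + 1) ^+ j.+1 :> R by rewrite natrX natr1.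
apply: (@mac_step _ _ _ _ _ _ ('C(m, j.+1)%:R) ('C(m, j)%:R)) => //.
- by rewrite ltr0n.
- by rewrite natr1 -natrM (mul_bin_down m.+1 j.+1) subSS natrM natrB.
- by rewrite natr1 -natrM (mul_bin_diag m.+1 j) natrM.
Qed.

End Mac.

Lemma maclaurin (R : realFieldType) n (a : 'I_n -> R) k : (forall i, 0 <= a i) ->
  (n ^ k)%:R * \sum_(S : {set 'I_n} | #|S| == k) \prod_(i in S) a i
    <= 'C(n, k)%:R * (\sum_i a i) ^+ k.
Proof.
move=> a0; have := @maclaurin_gen R _ a a0 n setT _ k.
rewrite cardsT card_ord => /(_ erefl).
rewrite /Esym (eq_bigl (fun S : {set 'I_n} => #|S| == k)); last by move=> S; rewrite subsetT.
have -> : \sum_(i in [set: 'I_n]) a i = \sum_i a i by apply: eq_bigl => i; rewrite in_setT.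
by [].
Qed.


From mathcomp Require Import all_classical all_reals all_analysis.

Lemma ln_conc (R : realType) (w l : R) : 0 <= w -> w <= 1 -> 1 <= l ->
  w * ln l <= ln (1 + w * (l - 1)).
Proof.
move=> w0 w1 l1.
have l0 : 0 < l by lra.
have := @concave_ln R (Itv01 w0 w1) l 1 l0 ltr01.
rewrite !convRE /= ln1 mulr0 addr0.
have -> : w * l + (1 - w) * 1 = 1 + w * (l - 1) by ring.
by [].
Qed.

Lemma card_sum (R : realType) n (P : pred {set 'I_n}) :
  (#|[set S : {set 'I_n} | P S]|%:R : R) = \sum_(S : {set 'I_n} | P S) 1.
Proof.
rewrite cardsE -sum1_card natr_sum; apply: eq_bigl => S; by [].
Qed.

Lemma count_bound (R : realType) n k (E : pred {set 'I_n}) (delta : R) : (k <= n)%N ->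
  \sum_(S : {set 'I_n} | (#|S| == k) && ~~ E S) 1 <= delta * 'C(n, k)%:R ->
  1 - delta <= unif_prob R k E.
Proof.
move=> kn hB; rewrite /unif_prob card_draws card_ord card_sum.
have C0 : 0 < 'C(n, k)%:R :> R by rewrite ltr0n bin_gt0.
rewrite ler_pdivlMr //.
have : 'C(n, k)%:R = \sum_(S : {set 'I_n} | #|S| == k) 1 :> R.
  have h : (#|[set S : {set 'I_n} | #|S| == k]|)%:R = 'C(n, k)%:R :> R.
    by rewrite card_draws card_ord.
  by rewrite -h card_sum.
rewrite (bigID E) /= => eC.
rewrite eC in hB *; lra.
Qed.

Theorem theorem4p2 (R : realType) (X : Type) (C : X -> Prop) (d : X -> X -> R)
    (n : nat) (x : 'I_n -> X) (qs : X) (qbar : {set 'I_n} -> X)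
    (T delta : R) (k : nat) :
  is_metric01 d ->
  is_social_opt d C x qs ->
  (forall S : {set 'I_n}, #|S| = k -> is_panel_opt d C x S (qbar S)) ->
  2 < T -> 0 < delta < 1 ->
  (k <= n)%N ->
  2 * ln (delta^-1) / ln (T ^+ 2 / (4 * (T - 1))) <= k%:R ->
  1 - delta <=
    unif_prob R k (fun S => d qs (qbar S) <= T * social_cost d x qs).
Proof.
move=> [d01 deq dsym dtri] [Cqs qsopt] hpan T2 /andP[dl0 dl1] kn hk.
set mu := social_cost d x qs.
set y := fun i => d qs (x i).
have y0 i : 0 <= y i by case/andP: (d01 qs (x i)).
have mu0 : 0 <= mu.
  rewrite /mu /social_cost; apply: mulr_ge0; first by rewrite invr_ge0 ler0n.
  by apply: sumr_ge0 => i _; case/andP: (d01 qs (x i)).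
have T0 : 0 < T by lra.
set tm := T * mu.
have tm0 : 0 <= tm by rewrite mulr_ge0 // ltW.
set lam := T - 1.
set B := 2 * (T - 1) / T.
have lam1 : 1 < lam by rewrite /lam; lra.
have B0 : 0 < B by rewrite /B divr_gt0 //; lra.
have eL : T ^+ 2 / (4 * (T - 1)) = lam / B ^+ 2.
  rewrite /lam /B; field; apply/andP; split; apply: lt0r_neq0; lra.
have Lgt1 : 1 < lam / B ^+ 2.
  rewrite -eL ltr_pdivlMr; last lra.
  nra.
have eL2 : ln (lam / B ^+ 2) = ln lam - 2 * ln B.
  rewrite ln_div ?posrE ?exprn_gt0 // ?(lt_trans ltr01) // lnXn // mulr2n mulr2n; ring.
have L0 : 0 < ln lam - 2 * ln B by rewrite -eL2 ln_gt0.
have ld : 0 < ln (delta^-1) by rewrite ln_gt0 // invf_gt1.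
rewrite eL eL2 in hk.
have k0 : (0 < k)%N.
  rewrite -(ltr0n R); apply: lt_le_trans hk.
  by rewrite divr_gt0 // mulr_gt0.
have hk2 : - 2 * ln delta <= k%:R * (ln lam - 2 * ln B).
  by move: hk; rewrite ler_pdivrMr // lnV ?posrE // mulrN mulNr mulrC.
have n0 : (0 < n)%N by apply: leq_trans kn.
apply: count_bound => //.
set w := fun i => if y i / tm < 1 then y i / tm else 1.
set a := fun i => 1 + w i * (lam - 1).
have w0 i : 0 <= w i.
  by rewrite /w; case: ifP => _ //; rewrite divr_ge0.
have w1 i : w i <= 1.
  by rewrite /w; case: ifP => h //; rewrite ltW.
have wy i : w i <= y i / tm.
  by rewrite /w; case: ifP => h //; rewrite leNgt h.
have a0 i : 0 < a i by rewrite /a; have := w0 i; nra.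
have sumy : \sum_i y i = n%:R * mu.
  rewrite /mu /social_cost mulrA divff ?mul1r //.
  by rewrite pnatr_eq0 -lt0n.
have hsumw : \sum_i w i <= n%:R / T.
  apply: (le_trans (ler_sum _ (fun i _ => wy i))).
  rewrite -mulr_suml sumy /tm.
  have [->|mup] := eqVneq mu 0.
    by rewrite mulr0 mul0r divr_ge0 // ltW.
  rewrite le_eqVlt; apply/orP; left; apply/eqP; field.
  by rewrite mup andbT lt0r_neq0.
have hsuma : \sum_i a i <= n%:R * B.
  rewrite /a big_split /= -mulr_suml sumr_const card_ord.
  have l0 : 0 <= lam - 1 by lra.
  have h := ler_wpM2r l0 hsumw.
  have -> : n%:R * B = n%:R + n%:R / T * (lam - 1).
    by rewrite /B /lam; field; apply: lt0r_neq0.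
  lra.
have hbad (S : {set 'I_n}) : #|S| == k -> ~~ (d qs (qbar S) <= tm) ->
    expR (ln lam * (k%:R / 2)) <= \prod_(i in S) a i.
  move=> hS hb; have tD : tm < d qs (qbar S) by rewrite ltNge.
  set D := d qs (qbar S) in tD *.
  set qb := qbar S in D tD *.
  have D0 : 0 < D by exact: le_lt_trans tm0 tD.
  have kS : #|S| = k by apply/eqP.
  have [_ hq] := hpan S kS.
  have hsum : \sum_(i in S) d qb (x i) <= \sum_(i in S) y i.
    by have := hq qs Cqs; rewrite /panel_cost kS ler_pM2l // invr_gt0 ltr0n.
  set m := fun i => if y i < D then y i else D.
  have h1 i : D - 2 * m i <= d qb (x i) - y i.
    have t1 := dtri qs (x i) qb; have t2 := dtri qs qb (x i).
    rewrite (dsym (x i) qb) in t1.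
    by rewrite /m /y; case: ifP => _; rewrite /D; lra.
  have h2 : k%:R * D <= 2 * \sum_(i in S) m i.
    have : \sum_(i in S) (D - 2 * m i) <= \sum_(i in S) (d qb (x i) - y i).
      by apply: ler_sum => i _; exact: h1.
    rewrite !sumrB sumr_const kS -mulr_sumr -mulr_natl => h; lra.
  have h3 i : m i <= D * w i.
    have [mu_0|mun0] := eqVneq mu 0.
      have yi0 : y i = 0.
        have := sumy; rewrite mu_0 mulr0 => /psumr_eq0P; apply => // j _.
      by rewrite /m /w yi0 mul0r ltr01 D0 mulr0.
    have tmp : 0 < tm by rewrite /tm mulr_gt0 // lt0r mun0 mu0.
    have ey : y i = (y i / tm) * tm by rewrite divfK // lt0r_neq0.
    have r0 : 0 <= y i / tm by rewrite divr_ge0 // ltW.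
    move: ey r0; rewrite /m /w; set r := y i / tm => ey r0.
    case: (ltP (y i) D) => h; case: (ltP r 1) => h'; nra.
  have h4 : k%:R / 2 <= \sum_(i in S) w i.
    have : 2 * \sum_(i in S) m i <= 2 * (D * \sum_(i in S) w i).
      by rewrite ler_pM2l // mulr_sumr; apply: ler_sum => i _; exact: h3.
    move=> h; rewrite -(ler_pM2r D0); nra.
  have -> : \prod_(i in S) a i = expR (\sum_(i in S) ln (a i)).
    by rewrite expR_sum; apply: eq_bigr => i _; rewrite lnK // posrE.
  rewrite ler_expR.
  apply: (@le_trans _ _ (\sum_(i in S) w i * ln lam)); last first.
    by apply: ler_sum => i _; exact: (@ln_conc R _ _ (w0 i) (w1 i) (ltW lam1)).
  rewrite -mulr_suml mulrC; apply: ler_wpM2r => //.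
  by apply: ln_ge0; apply: ltW.
set E := expR (ln lam * (k%:R / 2)).
have E0 : 0 < E by apply: expR_gt0.
have hmac : \sum_(S : {set 'I_n} | #|S| == k) \prod_(i in S) a i <= 'C(n, k)%:R * B ^+ k.
  have := @maclaurin R n a k (fun i => ltW (a0 i)).
  have nk0 : 0 < (n ^ k)%:R :> R by rewrite ltr0n expn_gt0 n0.
  move=> h; rewrite -(ler_pM2l nk0); apply: (le_trans h).
  rewrite natrX mulrCA -exprMn; apply: ler_wpM2l => //.
  apply: lerXn2r => //; rewrite nnegrE.
    by apply: sumr_ge0 => i _; exact: ltW.
  by rewrite mulr_ge0 // ltW.
have hBE : B ^+ k <= delta * E.
  have eB : B ^+ k = expR (k%:R * ln B) by rewrite expRM_natl lnK // posrE.
  have ed : delta = expR (ln delta) by rewrite lnK // posrE.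
  rewrite eB ed /E -expRD ler_expR.
  move: hk2; set K := k%:R; set u := ln lam; set v := ln B; set l := ln delta.
  nra.
rewrite -(ler_pM2r E0) mulr_suml.
apply: le_trans (_ : \sum_(S : {set 'I_n} | (#|S| == k) && ~~ (d qs (qbar S) <= tm)) \prod_(i in S) a i <= _).
  apply: ler_sum => S /andP[hS hb]; rewrite mul1r; exact: hbad.
apply: le_trans (_ : \sum_(S : {set 'I_n} | #|S| == k) \prod_(i in S) a i <= _).
  rewrite [leRHS](bigID (fun S => d qs (qbar S) <= tm)) /= lerDr.
  by apply: sumr_ge0 => S _; apply: prodr_ge0 => i _; apply: ltW.
apply: (le_trans hmac).
rewrite [delta * _]mulrC -mulrA; apply: ler_wpM2l => //.
Qed.
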